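(* If $\mathcal C$ is an infinite almost disjoint family of functions from $\omega$ to $\omega$ (each function viewed as a subset of $\omega\times\omega$), then $\bigcup\mathcal C$ is fat.
   Context: A set $F\subseteq\omega\times\omega$ is fat iff $\limsup_{n}|\pi_nF|=\omega$, where $\pi_nF=\{j:(n,j)\in F\}$; i.e. for every $m<\omega$ there are infinitely many $n$ with $|\pi_nF|>m$. An almost disjoint family is a collection of infinite sets whose pairwise intersections are finite. *)

(* Defs.v *)
From Stdlib Require Import List Arith.
Import ListNotations.

Definition finite_nat (A : nat -> Prop) : Prop :=
  exists N, forall n, A n -> n < N.

Definition finite_set {T : Type} (X : T -> Prop) : Prop :=
  exists l : list T, forall x, X x -> In x l.

Definition graph (f : nat -> nat) : nat * nat -> Prop :=
  fun p => snd p = f (fst p).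

(* Almost disjoint family: pairwise intersections of distinct members
   are finite (members, being graphs of functions, are infinite). *)
Definition almost_disjoint_fun (C : (nat -> nat) -> Prop) : Prop :=
  forall f g, C f -> C g -> f <> g ->
    finite_set (fun p => graph f p /\ graph g p).

Definition bigunion (C : (nat -> nat) -> Prop) : nat * nat -> Prop :=
  fun p => exists f, C f /\ graph f p.

Definition pi_sec (n : nat) (F : nat * nat -> Prop) : nat -> Prop :=
  fun j => F (n, j).

Definition card_gt (A : nat -> Prop) (m : nat) : Prop :=
  exists l : list nat, NoDup l /\ length l = S m /\ forall j, In j l -> A j.

Definition fat (F : nat * nat -> Prop) : Prop :=
  forall m, ~ finite_nat (fun n => card_gt (pi_sec n F) m).

(* Main.v *)
Require Import Defs.
From Stdlib Require Import List Arith Lia Classical.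
Import ListNotations.

Lemma list_bound (L : list (nat * nat)) : exists B, forall p, In p L -> fst p < B.
Proof.
  induction L as [|a L [B HB]].
  - exists 0. intros p [].
  - exists (S (max B (fst a))). intros p [<-|H]; [lia|]. specialize (HB p H). lia.
Qed.

Lemma fin_bound (f g : nat -> nat) :
  finite_set (fun p => graph f p /\ graph g p) -> exists B, forall n, B <= n -> f n <> g n.
Proof.
  intros [L HL]. destruct (list_bound L) as [B HB]. exists B. intros n Hn E.
  assert (H : In (n, f n) L) by (apply HL; unfold graph; simpl; auto).
  specialize (HB _ H). simpl in HB. lia.
Qed.

Lemma sep (C : (nat -> nat) -> Prop) (ad : almost_disjoint_fun C) f :
  C f -> forall l, (forall g, In g l -> C g /\ f <> g) ->
  exists B, forall n, B <= n -> ~ In (f n) (map (fun g => g n) l).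
Proof.
  intros Cf l. induction l as [|g l IH]; intros H.
  - exists 0. intros n _ [].
  - destruct IH as [B HB]. { intros h Hh. apply H. right. exact Hh. }
    destruct (H g (or_introl eq_refl)) as [Cg ne].
    destruct (fin_bound f g (ad f g Cf Cg ne)) as [B' HB'].
    exists (max B B'). intros n Hn [E|I].
    + apply (HB' n); [lia|]. auto.
    + apply (HB n); [lia|]. exact I.
Qed.

Lemma nodup_ev (C : (nat -> nat) -> Prop) (ad : almost_disjoint_fun C) :
  forall l, NoDup l -> (forall g, In g l -> C g) ->
  exists B, forall n, B <= n -> NoDup (map (fun g => g n) l).
Proof.
  induction l as [|f l IH]; intros ND HC.
  - exists 0. intros. constructor.
  - inversion ND as [|? ? Nin ND']; subst.
    destruct IH as [B HB]; auto. { intros g Hg; apply HC; right; auto. }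
    destruct (sep C ad f (HC f (or_introl eq_refl)) l) as [B' HB'].
    { intros g Hg. split. apply HC; right; auto. intros E; subst; auto. }
    exists (max B B'). intros n Hn. simpl. constructor.
    + apply HB'. lia.
    + apply HB. lia.
Qed.

Lemma big_list (C : (nat -> nat) -> Prop) : ~ finite_set C ->
  forall k, exists l, NoDup l /\ length l = k /\ forall g, In g l -> C g.
Proof.
  intros nf k. induction k as [|k [l [ND [Len HC]]]].
  - exists []. repeat split; auto. constructor. intros g [].
  - assert (exists f, C f /\ ~ In f l) as [f [Cf Nf]].
    { apply NNPP. intro Hn. apply nf. exists l. intros x Cx.
      apply NNPP. intro Hx. apply Hn. exists x. auto. }
    exists (f :: l). repeat split.
    + constructor; auto.
    + simpl; auto.
    + intros g [<-|Hg]; auto.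
Qed.

Theorem lemma2p2 (C : (nat -> nat) -> Prop) :
  ~ finite_set C -> almost_disjoint_fun C -> fat (bigunion C).
Proof.
  intros nf ad m [N HN].
  destruct (big_list C nf (S m)) as [l [ND [Len HC]]].
  destruct (nodup_ev C ad l ND HC) as [B HB].
  set (n := max N B).
  assert (n < N); [|lia].
  apply HN. exists (map (fun g => g n) l). repeat split.
  - apply HB. lia.
  - rewrite length_map. auto.
  - intros j Hj. apply in_map_iff in Hj. destruct Hj as [g [E Hg]].
    exists g. split; auto. unfold graph. simpl. auto.
Qed.
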